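(* Let $m,v,x,s>0$ and $u,w\in\mathbb{R}$ with $w\geq 0$. Let $\mathfrak{n}$ be the five-dimensional real Lie algebra with basis $\{E_1,\dots,E_5\}$ whose only non-vanishing brackets (up to antisymmetry) are $$[E_1,E_2]=mE_3+sE_4+uE_5,\qquad [E_1,E_3]=vE_4+wE_5,\qquad [E_1,E_4]=xE_5.$$ Equip the corresponding simply connected nilpotent Lie group with the left-invariant Riemannian metric for which $\{E_1,\dots,E_5\}$ is orthonormal. Then this metric is not an algebraic Ricci soliton.
   Context: Let $G$ be a Lie group with Lie algebra $\mathfrak{g}$ and let $g$ be a left-invariant Riemannian metric on $G$. Let $\mathrm{Ric}$ denote the $(1,1)$ Ricci tensor of $g$, viewed as a linear endomorphism of $\mathfrak{g}$. The metric $g$ is an algebraic Ricci soliton if there are a real number $c$ and a derivation $D$ of $\mathfrak{g}$ such that $\mathrm{Ric}=c\,\mathrm{Id}+D$. *)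

(* Defs.v *)
(* Left-invariant metrics on a Lie group are handled at the
   Lie-algebra level: g = R^n (row vectors) with a bracket given by structure
   constants on the basis e_0..e_{n-1}, which is declared orthonormal. *)
From HB Require Import structures.
From mathcomp Require Import all_boot all_order all_algebra.
Set Implicit Arguments. Unset Strict Implicit. Unset Printing Implicit Defensive.
Import Order.TTheory GRing.Theory Num.Theory.
Local Open Scope ring_scope.

Section LieMetric.
Variable R : realFieldType.
Variable n : nat.
(* cst i j = [e_i, e_j] *)
Variable cst : 'I_n -> 'I_n -> 'rV[R]_n.

Definition ev (i : 'I_n) : 'rV[R]_n := delta_mx 0 i.

Definition vdot (a b : 'rV[R]_n) : R := \sum_i a 0 i * b 0 i.

Definition br (a b : 'rV[R]_n) : 'rV[R]_n :=
  \sum_i \sum_j (a 0 i * b 0 j) *: cst i j.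

(* Levi-Civita connection of the left-invariant metric (Koszul formula):
   <nabla_X Y, Z> = 1/2 (<[X,Y],Z> - <[Y,Z],X> + <[Z,X],Y>) *)
Definition nabla (a b : 'rV[R]_n) : 'rV[R]_n :=
  \sum_k (2^-1 * (vdot (br a b) (ev k) - vdot (br b (ev k)) a
                  + vdot (br (ev k) a) b)) *: ev k.

Definition curv (a b c : 'rV[R]_n) : 'rV[R]_n :=
  nabla a (nabla b c) - nabla b (nabla a c) - nabla (br a b) c.

Definition ric (b c : 'rV[R]_n) : R := \sum_i vdot (curv (ev i) b c) (ev i).

Definition Ric (b : 'rV[R]_n) : 'rV[R]_n := \sum_k ric b (ev k) *: ev k.

Definition is_derivation (D : 'M[R]_n) : Prop :=
  forall a b, br a b *m D = br (a *m D) b + br a (b *m D).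

Definition algebraic_ricci_soliton : Prop :=
  exists (c : R) (D : 'M[R]_n), is_derivation D /\
    forall a, Ric a = c *: a + a *m D.
End LieMetric.

(* The five-dimensional nilpotent Lie algebra n; E_{k+1} is ev k (0-indexed):
   [E1,E2] = m E3 + s E4 + u E5, [E1,E3] = v E4 + w E5, [E1,E4] = x E5. *)
Definition n5_bracket (R : realFieldType) (m s u v w x : R)
    (i j : 'I_5) : 'rV[R]_5 :=
  let e := @ev R 5 in
  match (nat_of_ord i, nat_of_ord j) return 'rV[R]_5 with
  | (0, 1)%N => m *: e (inord 2) + s *: e (inord 3) + u *: e (inord 4)
  | (1, 0)%N => - (m *: e (inord 2) + s *: e (inord 3) + u *: e (inord 4))
  | (0, 2)%N => v *: e (inord 3) + w *: e (inord 4)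
  | (2, 0)%N => - (v *: e (inord 3) + w *: e (inord 4))
  | (0, 3)%N => x *: e (inord 4)
  | (3, 0)%N => - (x *: e (inord 4))
  | _ => 0
  end.

(* Main.v *)
Require Import Defs.
From HB Require Import structures.
From mathcomp Require Import all_boot all_order all_algebra ring lra.
Import Order.TTheory GRing.Theory Num.Theory.
Local Open Scope ring_scope.
Set Implicit Arguments. Unset Strict Implicit.

Lemma evE (R : realFieldType) n (i j : 'I_n) : (ev R i) 0 j = (i == j)%:R.
Proof. by rewrite /ev mxE eqxx eq_sym. Qed.

Lemma sum_delta (R : realFieldType) n (f : 'I_n -> R) k :
  \sum_i f i * (i == k)%:R = f k.
Proof.
rewrite (bigD1 k) //= eqxx mulr1 big1 ?addr0 // => i /negbTE ->; by rewrite mulr0.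
Qed.

Lemma sum_delta' (R : realFieldType) n (f : 'I_n -> R) k :
  \sum_i (k == i)%:R * f i = f k.
Proof.
rewrite -[RHS](sum_delta f k); apply: eq_bigr => i _; by rewrite mulrC eq_sym.
Qed.

Lemma vdot_ev (R : realFieldType) n (a : 'rV[R]_n) k : vdot a (ev R k) = a 0 k.
Proof. rewrite /vdot; under eq_bigr do rewrite evE eq_sym; exact: (sum_delta (fun i => a 0 i)). Qed.

Lemma sum_ev (R : realFieldType) n (r : 'I_n -> R) l :
  (\sum_k r k *: ev R k) 0 l = r l.
Proof. rewrite summxE; under eq_bigr do rewrite mxE evE; exact: (sum_delta r). Qed.

Lemma brE (R : realFieldType) n cst (a b : 'rV[R]_n) q :
  br cst a b 0 q = \sum_i \sum_j a 0 i * b 0 j * cst i j 0 q.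
Proof.
rewrite /br summxE; apply: eq_bigr => i _; rewrite summxE; apply: eq_bigr => j _.
by rewrite mxE.
Qed.

Lemma br_evr (R : realFieldType) n cst (a : 'rV[R]_n) k q :
  br cst a (ev R k) 0 q = \sum_i a 0 i * cst i k 0 q.
Proof.
rewrite brE; apply: eq_bigr => i _.
rewrite -(sum_delta (fun j => a 0 i * cst i j 0 q) k).
by apply: eq_bigr => j _; rewrite evE eq_sym /=; ring.
Qed.

Lemma br_evl (R : realFieldType) n cst (b : 'rV[R]_n) k q :
  br cst (ev R k) b 0 q = \sum_j b 0 j * cst k j 0 q.
Proof.
rewrite brE.
rewrite exchange_big /=; apply: eq_bigr => j _.
rewrite -(sum_delta' (fun i => b 0 j * cst i j 0 q) k).
by apply: eq_bigr => i _; rewrite evE /=; ring.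
Qed.

Definition Gm (R : realFieldType) n (cst : 'I_n -> 'I_n -> 'rV[R]_n) i j q : R :=
  2^-1 * (cst i j 0 q - cst j q 0 i + cst q i 0 j).

Lemma nablaE (R : realFieldType) n cst (a b : 'rV[R]_n) q :
  nabla cst a b 0 q = \sum_i \sum_j a 0 i * b 0 j * Gm cst i j q.
Proof.
rewrite /nabla sum_ev !vdot_ev brE /vdot.
under [X in _ - X + _]eq_bigr do rewrite br_evr mulr_suml.
under [X in _ + X]eq_bigr do rewrite br_evl mulr_suml.
rewrite [X in _ + X]exchange_big /=.
rewrite -sumrN -!big_split /= mulr_sumr; apply: eq_bigr => i _.
rewrite -sumrN -!big_split /= mulr_sumr; apply: eq_bigr => j _.
rewrite /Gm; ring.
Qed.

Lemma nabla_evl (R : realFieldType) n cst i (y : 'rV[R]_n) q :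
  nabla cst (ev R i) y 0 q = \sum_j y 0 j * Gm cst i j q.
Proof.
rewrite nablaE exchange_big /=; apply: eq_bigr => j _.
rewrite -(sum_delta' (fun t => y 0 j * Gm cst t j q) i).
by apply: eq_bigr => t _; rewrite evE /=; ring.
Qed.

Lemma nabla_evr (R : realFieldType) n cst (y : 'rV[R]_n) l q :
  nabla cst y (ev R l) 0 q = \sum_p y 0 p * Gm cst p l q.
Proof.
rewrite nablaE; apply: eq_bigr => p _.
rewrite -(sum_delta (fun t => y 0 p * Gm cst p t q) l).
by apply: eq_bigr => t _; rewrite evE eq_sym /=; ring.
Qed.

Lemma nabla_ev2 (R : realFieldType) n cst (k l p : 'I_n) :
  nabla cst (ev R k) (ev R l) 0 p = Gm cst k l p.
Proof.
rewrite nabla_evl -(sum_delta' (fun t => Gm cst k t p) l).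
by apply: eq_bigr => t _; rewrite evE.
Qed.

Lemma br_ev2 (R : realFieldType) n cst (k l p : 'I_n) :
  br cst (ev R k) (ev R l) 0 p = cst k l 0 p.
Proof.
rewrite br_evl -(sum_delta' (fun t => cst k t 0 p) l).
by apply: eq_bigr => t _; rewrite evE.
Qed.

Lemma ricE (R : realFieldType) n cst (k l : 'I_n) :
  ric cst (ev R k) (ev R l) = \sum_i (\sum_p Gm cst k l p * Gm cst i p i
    - \sum_p Gm cst i l p * Gm cst k p i - \sum_p cst i k 0 p * Gm cst p l i).
Proof.
rewrite /ric; apply: eq_bigr => i _; rewrite vdot_ev /curv !mxE.
rewrite !nabla_evl nabla_evr.
congr (_ - _ - _); apply: eq_bigr => p _; by rewrite ?nabla_ev2 ?br_ev2.
Qed.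

Lemma rowD (R : realFieldType) n (D : 'M[R]_n) k l : (ev R k *m D) 0 l = D k l.
Proof.
rewrite mxE -(sum_delta' (fun j => D j l) k); apply: eq_bigr => j _; by rewrite evE.
Qed.

Definition cn (R : realFieldType) (m s u v w x : R) (i j q : nat) : R :=
  match i, j, q with
  | 0%N, 1%N, 2%N => m | 0%N, 1%N, 3%N => s | 0%N, 1%N, 4%N => u
  | 1%N, 0%N, 2%N => - m | 1%N, 0%N, 3%N => - s | 1%N, 0%N, 4%N => - u
  | 0%N, 2%N, 3%N => v | 0%N, 2%N, 4%N => w | 2%N, 0%N, 3%N => - v | 2%N, 0%N, 4%N => - w
  | 0%N, 3%N, 4%N => x | 3%N, 0%N, 4%N => - x
  | _, _, _ => 0
  end.

Lemma inordE (k : nat) (q : 'I_5) : (k < 5)%N -> ((inord k : 'I_5) == q) = (k == val q).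
Proof. by move=> hk; rewrite -val_eqE /= inordK. Qed.

Lemma inordE2 (k : nat) (q : 'I_5) : (k < 5)%N -> (q == (inord k : 'I_5)) = (val q == k).
Proof. by move=> hk; rewrite -val_eqE /= inordK. Qed.

Lemma n5E (R : realFieldType) (m s u v w x : R) (i j q : 'I_5) :
  n5_bracket m s u v w x i j 0 q = cn m s u v w x i j q.
Proof.
rewrite /n5_bracket.
case: i => [[|[|[|[|[|i]]]]] Hi] //;
case: j => [[|[|[|[|[|j]]]]] Hj] //=;
rewrite ?mxE ?evE ?inordE2 //;
case: q => [[|[|[|[|[|q]]]]] Hq] //=; ring.
Qed.

Notation o0 := (@Ordinal 5 0 isT).
Notation o1 := (@Ordinal 5 1 isT).
Notation o2 := (@Ordinal 5 2 isT).
Notation o3 := (@Ordinal 5 3 isT).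
Notation o4 := (@Ordinal 5 4 isT).

Ltac ricval := rewrite ricE !big_ord_recl !big_ord0 /Gm !n5E /=; field; done.

Lemma ric42 (R : realFieldType) (m s u v w x : R) :
  ric (n5_bracket m s u v w x) (ev R o4) (ev R o2) = m * u / 2.
Proof. ricval. Qed.

Lemma ric31 (R : realFieldType) (m s u v w x : R) :
  ric (n5_bracket m s u v w x) (ev R o3) (ev R o1) = - (u * x) / 2.
Proof. ricval. Qed.

Lemma ric43 (R : realFieldType) (m s u v w x : R) :
  ric (n5_bracket m s u v w x) (ev R o4) (ev R o3) = (s * u + v * w) / 2.
Proof. ricval. Qed.

Lemma ric32 (R : realFieldType) (m s u v w x : R) :
  ric (n5_bracket m s u v w x) (ev R o3) (ev R o2) = (m * s - w * x) / 2.
Proof. ricval. Qed.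

Lemma ric21 (R : realFieldType) (m s u v w x : R) :
  ric (n5_bracket m s u v w x) (ev R o2) (ev R o1) = - (s * v + u * w) / 2.
Proof. ricval. Qed.
Lemma sum5 (R : realFieldType) (f : 'I_5 -> R) :
  \sum_i f i = f o0 + f o1 + f o2 + f o3 + f o4.
Proof. rewrite !big_ord_recl big_ord0 addr0 !addrA. by repeat congr (_ + _); congr f; apply: val_inj. Qed.

Lemma eq_ring (R : realFieldType) (a b a' b' : R) : a = b -> 2 * (a - b) = a' - b' -> a' = b'.
Proof. move=> -> /eqP; rewrite subrr mulr0 eq_sym subr_eq0 => /eqP //. Qed.

Lemma lin2 (R : realFieldType) (a b c d e : R) : a = b -> c = d -> e = (a - b) + (c - d) -> e = 0.
Proof. by move=> -> -> ->; rewrite !subrr addr0. Qed.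

Lemma addE (R : realFieldType) n (A B : 'rV[R]_n) q : (A + B) 0 q = A 0 q + B 0 q.
Proof. by rewrite mxE. Qed.
Lemma mulE (R : realFieldType) n (A : 'rV[R]_n) (D : 'M_n) q : (A *m D) 0 q = \sum_j A 0 j * D j q.
Proof. by rewrite mxE. Qed.

Theorem mainTheorem5 (R : realFieldType) (m v x s u w : R)
  (hm : 0 < m) (hv : 0 < v) (hx : 0 < x) (hs : 0 < s) (hw : 0 <= w) :
  ~ algebraic_ricci_soliton (n5_bracket m s u v w x).
Proof.
move=> [c [D [Hder HRic]]].
have HD k l : D k l = ric (n5_bracket m s u v w x) (ev R k) (ev R l) - c * (k == l)%:R.
  have := congr1 (fun M : 'rV_5 => M 0 l) (HRic (ev R k)).
  rewrite /= /Ric sum_ev mxE rowD mxE evE => ->; ring.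
have E p r q := congr1 (fun M : 'rV_5 => M 0 q) (Hder (ev R p) (ev R r)).
have E1 := E o0 o3 o2; have E2 := E o0 o3 o3; have E3 := E o0 o2 o2.
move: E1 E2 E3 => /=.
rewrite !addE !mulE !sum5 !br_ev2 !br_evr !br_evl !sum5 !rowD !n5E /=.
rewrite !HD ric42 ric31 ric43 ric32 ric21 /= => E1 E2 E3.
have {}E1 : x * (m * u) = m * (- (u * x)).
  by apply: (eq_ring E1); field.
have {}E2 : x * (s * u + v * w) = s * (- (u * x)) + v * (m * s - w * x).
  by apply: (eq_ring E2); field.
have {}E3 : v * (m * s - w * x) + w * (m * u) = m * (- (s * v + u * w)).
  by apply: (eq_ring E3); field.
have hu : u = 0.
  have : 2 * x * m * u = 0 by rewrite -(subrr (x * (m * u))) {2}E1; ring.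
  move/eqP; rewrite !mulf_eq0 pnatr_eq0 /= (gt_eqF hx) (gt_eqF hm) /= => /eqP //.
subst u.
have H : v * (x * w + m * s) = 0.
  by apply: (lin2 E2 E3); ring.
move/eqP: H; rewrite mulf_eq0 (gt_eqF hv) /= => /eqP H.
have h1 := mulr_ge0 (ltW hx) hw; have h2 := mulr_gt0 hm hs.
lra.
Qed.
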